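(* Let $P$ be a free $\mathbb{Z}_2$-poset, where $\mathbb{Z}_2=\{+1,-1\}$. The compatibility graph $C_P$ is triangle-free if and only if there are no $x,y\in P$ such that $x\preceq y$ and $x\preceq -y$.
   Context: A $\mathbb{Z}_2$-poset is a poset $(P,\preceq)$ with an action of $\mathbb{Z}_2=\{+1,-1\}$ preserving the order ($x\preceq y\Rightarrow -x\preceq -y$); it is free if $-x\neq x$ for all $x$. The compatibility graph $C_P$ of a $G$-poset $P$ is the simple graph with vertex set $P$ in which distinct $x,y$ are adjacent if there is $g\in G\setminus\{e\}$ such that $x$ and $g\cdot y$ are comparable in $P$; for $G=\mathbb{Z}_2$ this means $x$ and $-y$ are comparable. *)

(* Defs.v *)
From mathcomp Require Import all_boot all_order.
Set Implicit Arguments. Unset Strict Implicit. Unset Printing Implicit Defensive.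
Import Order.TTheory.
Local Open Scope order_scope.

(* A Z_2-action on a poset T is given by the action of the generator -1,
   an involution [neg]; the action of +1 is the identity. *)
Definition Z2_poset_action (d : Order.disp_t) (T : porderType d) (neg : T -> T) : Prop :=
  involutive neg /\ (forall x y : T, x <= y -> neg x <= neg y).

Definition Z2_free (T : Type) (neg : T -> T) : Prop := forall x, neg x <> x.

(* Adjacency in the compatibility graph C_P: x <> y and x is comparable to g.y
   for some g <> e, i.e. (for G = Z_2) to -y. *)
Definition compat_adj (d : Order.disp_t) (T : porderType d) (neg : T -> T) (x y : T) : Prop :=
  x <> y /\ (x >=< neg y).

Definition compat_triangle_free (d : Order.disp_t) (T : porderType d) (neg : T -> T) : Prop :=
  ~ exists x y z : T,
      compat_adj neg x y /\ compat_adj neg y z /\ compat_adj neg x z.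

(* Main.v *)
Require Import Defs.
From mathcomp Require Import all_boot all_order.
Import Order.TTheory.
Local Open Scope order_scope.

Theorem lemma19 (d : Order.disp_t) (T : porderType d) (neg : T -> T)
  (hact : Z2_poset_action neg) (hfree : Z2_free neg) :
  compat_triangle_free neg <->
  ~ (exists x y : T, x <= y /\ x <= neg y).
Proof.
have [hinv hm] := hact.
have noself : forall u : T, ~ (u <= neg u).
  move=> u hu; apply: (hfree u); apply/eqP; rewrite eq_le hu andbT.
  by have := hm _ _ hu; rewrite hinv.
split.
- move=> htf [x [y [hxy hxny]]]; apply: htf.
  have nxy : x <> y by move=> e; subst; exact: noself hxny.
  have nxny : x <> neg y.
    move=> e; subst; apply: (noself (neg y)); by rewrite hinv.
  exists x, y, (neg y); split; [|split].
  + by split => //; rewrite /Order.comparable hxny.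
  + split; first by move=> e; apply: (hfree y); rewrite -e.
    by rewrite hinv comparablexx.
  + by split => //; rewrite hinv /Order.comparable hxy.
- move=> hno [x [y [z [[_ e0] [[_ e2] [_ e1]]]]]]; apply: hno.
  move: e0 e1 e2 => /orP [] h0 /orP [] h1 /orP [] h2;
  have g0 := hm _ _ h0; have g1 := hm _ _ h1; have g2 := hm _ _ h2;
  rewrite ?hinv in g0 g1 g2.
  * exists x, (neg z); split; [by  exact: h1 | rewrite ?hinv; by apply: (le_trans h0); exact: g2].
  * exists x, (neg y); split; [by  exact: h0 | rewrite ?hinv; by apply: (le_trans h1); exact: h2].
  * exists x, x; split; [by exact: lexx | by apply: (le_trans h0); apply: (le_trans g2); exact: g1].
  * exists z, (neg y); split; [by  exact: g2 | rewrite ?hinv; by apply: (le_trans g1); exact: g0].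
  * exists y, (neg z); split; [by  exact: h2 | rewrite ?hinv; by apply: (le_trans g0); exact: g1].
  * exists x, x; split; [by exact: lexx | by apply: (le_trans h1); apply: (le_trans h2); exact: g0].
  * exists y, (neg x); split; [by  exact: g0 | rewrite ?hinv; by apply: (le_trans h2); exact: h1].
  * exists z, (neg x); split; [by  exact: g1 | rewrite ?hinv; by apply: (le_trans g2); exact: h0].
Qed.
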